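(* Consider a $K$-armed bandit ($K\ge2$) with reward vector $r\in[0,1]^K$ having distinct entries, and let $\pi^*$ be the one-hot policy on the optimal arm. For any temperature $\eta\in(0,\infty)$, the discrete DG update $\theta_{t+1}(a)=\theta_t(a)+\alpha\,w_t(a)U_t(a)$ with sufficiently small step size $\alpha>0$ yields policies $\pi_{\theta_t}$ converging to $\pi^*$.
   Context: Softmax policy $\pi_\theta(a)=e^{\theta(a)}/\sum_{a'}e^{\theta(a')}$; $\pi_t=\pi_{\theta_t}$. $U_t(a):=r(a)-\pi_t^\top r$, $\ell_t(a):=-\log\pi_t(a)$, and $w_t(a):=\sigma(U_t(a)\ell_t(a)/\eta)$ with $\sigma(x)=1/(1+e^{-x})$. Equivalently $\pi_{t+1}(a)=\pi_t(a)e^{\alpha w_t(a)U_t(a)}/\sum_{a'}\pi_t(a')e^{\alpha w_t(a')U_t(a')}$. *)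

(* Defs.v *)
From HB Require Import structures.
From mathcomp Require Import all_boot all_order all_algebra.
From mathcomp Require Import all_classical all_reals all_analysis.
Set Implicit Arguments. Unset Strict Implicit. Unset Printing Implicit Defensive.
Import Order.TTheory GRing.Theory Num.Theory.
Local Open Scope ring_scope.

Section DG.
Variables (R : realType) (K : nat).

Definition softmax (theta : 'I_K -> R) (a : 'I_K) : R :=
  expR (theta a) / \sum_(b < K) expR (theta b).

Definition advU (r theta : 'I_K -> R) (a : 'I_K) : R :=
  r a - \sum_(b < K) softmax theta b * r b.

Definition ellL (theta : 'I_K -> R) (a : 'I_K) : R := - ln (softmax theta a).

Definition sigmoid (x : R) : R := 1 / (1 + expR (- x)).

Definition wgt (eta : R) (r theta : 'I_K -> R) (a : 'I_K) : R :=
  sigmoid (advU r theta a * ellL theta a / eta).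

Definition DG_step (eta alpha : R) (r theta : 'I_K -> R) : 'I_K -> R :=
  fun a => theta a + alpha * wgt eta r theta a * advU r theta a.

Definition DG_iter (eta alpha : R) (r theta0 : 'I_K -> R) (t : nat) : 'I_K -> R :=
  iter t (DG_step eta alpha r) theta0.

End DG.

(* Main.v *)
Require Import Defs.
From HB Require Import structures.
From mathcomp Require Import all_boot all_order all_algebra.
From mathcomp Require Import all_classical all_reals all_analysis.
From mathcomp Require Import ring lra.
Import Order.TTheory GRing.Theory Num.Theory numFieldNormedType.Exports.
Local Open Scope classical_set_scope.
Local Open Scope ring_scope.
Set Implicit Arguments. Unset Strict Implicit.

Lemma sum_ge_term (R : realType) (K : nat) (F : 'I_K -> R) (j : 'I_K) :
  (forall i, 0 <= F i) -> F j <= \sum_i F i.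
Proof.
move=> H; rewrite (bigD1 j) //= lerDl; apply: sumr_ge0 => i _; exact: H.
Qed.

Lemma Z_gt0 (R : realType) (K : nat) (th : 'I_K -> R) (a0 : 'I_K) :
  0 < \sum_(b < K) expR (th b).
Proof.
apply: (lt_le_trans (expR_gt0 (th a0))).
by apply: (@sum_ge_term _ _ (fun b => expR (th b)) a0) => i; exact/ltW/expR_gt0.
Qed.

Lemma softmax_gt0 (R : realType) (K : nat) (th : 'I_K -> R) (a : 'I_K) :
  0 < softmax th a.
Proof. by rewrite /softmax divr_gt0 // ?expR_gt0 // (Z_gt0 th a). Qed.

Lemma softmax_sum1 (R : realType) (K : nat) (th : 'I_K -> R) (a0 : 'I_K) :
  \sum_a softmax th a = 1.
Proof.
rewrite /softmax -mulr_suml divff //; exact/lt0r_neq0/(Z_gt0 th a0).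
Qed.

Lemma softmax_le1 (R : realType) (K : nat) (th : 'I_K -> R) (a : 'I_K) :
  softmax th a <= 1.
Proof.
rewrite -(softmax_sum1 th a); apply: (@sum_ge_term _ _ (softmax th) a) => i.
exact/ltW/softmax_gt0.
Qed.

Lemma softmax_ratio (R : realType) (K : nat) (th : 'I_K -> R) (a b : 'I_K) :
  softmax th b = expR (th b - th a) * softmax th a.
Proof. by rewrite /softmax mulrA -expRD subrK. Qed.

Definition Jv (R : realType) (K : nat) (r th : 'I_K -> R) : R :=
  \sum_(b < K) softmax th b * r b.

Lemma sum_piU (R : realType) (K : nat) (r th : 'I_K -> R) (a0 : 'I_K) :
  \sum_a softmax th a * advU r th a = 0.
Proof.
rewrite /advU; under eq_bigr do rewrite mulrBr.
by rewrite sumrB -mulr_suml softmax_sum1 // mul1r subrr.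
Qed.

Lemma J_ge0 (R : realType) (K : nat) (r th : 'I_K -> R) :
  (forall a, 0 <= r a <= 1) -> 0 <= Jv r th.
Proof.
move=> h; apply: sumr_ge0 => i _; apply: mulr_ge0; first exact/ltW/softmax_gt0.
by case/andP: (h i).
Qed.

Lemma J_le (R : realType) (K : nat) (r th : 'I_K -> R) (M : R) (a0 : 'I_K) :
  (forall a, r a <= M) -> Jv r th <= M.
Proof.
move=> h; rewrite /Jv -[M]mul1r -(softmax_sum1 th a0) mulr_suml.
apply: ler_sum => i _; apply: ler_wpM2l; [exact/ltW/softmax_gt0 | exact: h].
Qed.

Lemma advU_le1 (R : realType) (K : nat) (r th : 'I_K -> R) (a : 'I_K) :
  (forall a, 0 <= r a <= 1) -> advU r th a <= 1.
Proof.
move=> h; have := J_ge0 th h; case/andP: (h a) => _ h1.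
rewrite /advU -/(Jv r th); lra.
Qed.

Lemma sigmoid_gt0 (R : realType) (x : R) : 0 < sigmoid x.
Proof. rewrite /sigmoid divr_gt0 //; have := expR_gt0 (- x); lra. Qed.

Lemma sigmoid_le1 (R : realType) (x : R) : sigmoid x <= 1.
Proof.
rewrite /sigmoid ler_pdivrMr; last by have := expR_gt0 (- x); lra.
have := expR_gt0 (- x); lra.
Qed.

Lemma sigmoid_ge_half (R : realType) (x : R) : 0 <= x -> 1/2 <= sigmoid x.
Proof.
move=> hx; rewrite /sigmoid ler_pdivlMr; last by have := expR_gt0 (- x); lra.
have : expR (- x) <= 1 by rewrite expR_le1; lra.
lra.
Qed.

Lemma ell_ge0 (R : realType) (K : nat) (th : 'I_K -> R) (a : 'I_K) :
  0 <= ellL th a.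
Proof. rewrite /ellL oppr_ge0; apply: ln_le0; exact: softmax_le1. Qed.

Lemma wgt_ge_half (R : realType) (K : nat) (eta : R) (r th : 'I_K -> R) (a : 'I_K) :
  0 < eta -> 0 <= advU r th a -> 1/2 <= wgt eta r th a.
Proof.
move=> he hU; apply: sigmoid_ge_half; apply: divr_ge0; last exact: ltW.
apply: mulr_ge0 => //; exact: ell_ge0.
Qed.

Lemma expterm_ge0 (R : realType) (c x : R) : 0 < c -> 0 <= (expR (c * x) - 1) * x.
Proof.
move=> hc; have [hx|hx] := leP 0 x.
  apply: mulr_ge0 => //; have := expR_ge1Dx (c * x).
  have : 0 <= c * x by apply: mulr_ge0 => //; exact: ltW.
  lra.
apply: mulr_le0; last exact: ltW.
have : c * x <= 0 by apply: mulr_ge0_le0; [exact: ltW | exact: ltW].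
rewrite -expR_le1; lra.
Qed.

Lemma expterm_gain (R : realType) (c x : R) : 0 <= x -> c * x * x <= (expR (c * x) - 1) * x.
Proof.
move=> hx; apply: ler_wpM2r => //; have := expR_ge1Dx (c * x); lra.
Qed.

Definition dd (R : realType) (K : nat) (eta alpha : R) (r th : 'I_K -> R) (a : 'I_K) : R :=
  alpha * wgt eta r th a * advU r th a.

Lemma dd_le (R : realType) (K : nat) (eta alpha : R) (r th : 'I_K -> R) (a : 'I_K) :
  (forall a, 0 <= r a <= 1) -> 0 < alpha -> dd eta alpha r th a <= alpha.
Proof.
move=> h ha; rewrite /dd -mulrA; rewrite -{2}[alpha]mulr1; apply: ler_wpM2l; first exact: ltW.
have := sigmoid_gt0 (advU r th a * ellL th a / eta).
have := sigmoid_le1 (advU r th a * ellL th a / eta).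
have := advU_le1 th a h.
rewrite /wgt; set w := sigmoid _; set U := advU r th a.
nra.
Qed.

Lemma softmax_step (R : realType) (K : nat) (eta alpha : R) (r th : 'I_K -> R) (a : 'I_K) :
  softmax (DG_step eta alpha r th) a =
  softmax th a * expR (dd eta alpha r th a) *
  ((\sum_(b < K) expR (th b)) / \sum_(b < K) expR (DG_step eta alpha r th b)).
Proof.
have hZ := Z_gt0 th a.
have hZ' := Z_gt0 (DG_step eta alpha r th) a.
rewrite /softmax {1}/DG_step expRD -/(dd eta alpha r th a).
set Z := \sum_(b < K) expR (th b) in hZ *.
set Z' := \sum_(b < K) expR (DG_step eta alpha r th b) in hZ' *.
field; apply/andP; split; exact: lt0r_neq0.
Qed.

Lemma step_identity (R : realType) (K : nat) (eta alpha : R) (r th : 'I_K -> R) (a0 : 'I_K) :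
  Jv r (DG_step eta alpha r th) - Jv r th =
  ((\sum_(b < K) expR (th b)) / \sum_(b < K) expR (DG_step eta alpha r th b)) *
  \sum_a softmax th a * ((expR (dd eta alpha r th a) - 1) * advU r th a).
Proof.
have e1 : Jv r (DG_step eta alpha r th) - Jv r th =
    \sum_a softmax (DG_step eta alpha r th) a * advU r th a.
  rewrite /advU; under [RHS]eq_bigr do rewrite mulrBr.
  by rewrite sumrB -mulr_suml (softmax_sum1 _ a0) mul1r.
have e2 : \sum_a softmax th a * ((expR (dd eta alpha r th a) - 1) * advU r th a) =
    \sum_a softmax th a * expR (dd eta alpha r th a) * advU r th a.
  have : \sum_a softmax th a * ((expR (dd eta alpha r th a) - 1) * advU r th a) =
    \sum_a (softmax th a * expR (dd eta alpha r th a) * advU r th a - softmax th a * advU r th a).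
    by apply: eq_bigr => i _; ring.
  by move=> ->; rewrite sumrB (sum_piU r th a0) subr0.
rewrite e1 e2 mulr_sumr; apply: eq_bigr => i _; rewrite softmax_step; ring.
Qed.

Lemma ratio_ge (R : realType) (K : nat) (eta alpha : R) (r th : 'I_K -> R) (a0 : 'I_K) :
  (forall a, 0 <= r a <= 1) -> 0 < alpha ->
  expR (- alpha) <= (\sum_(b < K) expR (th b)) / \sum_(b < K) expR (DG_step eta alpha r th b).
Proof.
move=> h ha; rewrite ler_pdivlMr; last exact: Z_gt0 _ a0.
rewrite mulr_sumr; apply: ler_sum => b _; rewrite /DG_step -/(dd eta alpha r th b).
rewrite -expRD ler_expR; have := dd_le eta th b h ha; lra.
Qed.

Lemma term_ge0 (R : realType) (K : nat) (eta alpha : R) (r th : 'I_K -> R) (a : 'I_K) :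
  0 < alpha ->
  0 <= softmax th a * ((expR (dd eta alpha r th a) - 1) * advU r th a).
Proof.
move=> ha; apply: mulr_ge0; first exact/ltW/softmax_gt0.
rewrite /dd; apply: expterm_ge0; apply: mulr_gt0 => //; exact: sigmoid_gt0.
Qed.

Lemma step_mono (R : realType) (K : nat) (eta alpha : R) (r th : 'I_K -> R) (a0 : 'I_K) :
  (forall a, 0 <= r a <= 1) -> 0 < alpha ->
  Jv r th <= Jv r (DG_step eta alpha r th).
Proof.
move=> h ha; rewrite -subr_ge0 (step_identity _ _ _ _ a0); apply: mulr_ge0.
  apply: ltW; apply: divr_gt0; exact: Z_gt0 _ a0.
by apply: sumr_ge0 => i _; apply: term_ge0.
Qed.

Lemma step_gain (R : realType) (K : nat) (eta alpha : R) (r th : 'I_K -> R) (a : 'I_K) :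
  (forall a, 0 <= r a <= 1) -> 0 < alpha -> 0 < eta -> 0 <= advU r th a ->
  expR (- alpha) * (alpha / 2 * (softmax th a * advU r th a ^+ 2))
   <= Jv r (DG_step eta alpha r th) - Jv r th.
Proof.
move=> h ha he hU; rewrite (step_identity _ _ _ _ a).
apply: ler_pM.
- exact/ltW/expR_gt0.
- apply: mulr_ge0; first lra.
  apply: mulr_ge0; [exact/ltW/softmax_gt0 | exact: sqr_ge0].
- exact: ratio_ge.
apply: le_trans; last first.
  apply: (@sum_ge_term _ _ (fun i => softmax th i * ((expR (dd eta alpha r th i) - 1) * advU r th i)) a).
  by move=> i; apply: term_ge0.
have hw := wgt_ge_half he hU.
have hp := softmax_gt0 th a.
have := expterm_gain (alpha * wgt eta r th a) hU.
rewrite /dd; set w := wgt eta r th a; set U := advU r th a; set p := softmax th a.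
move=> hg.
have : alpha / 2 * (p * U ^+ 2) <= p * (alpha * w * U * U).
  rewrite expr2; have hq : 0 <= alpha * p * (U * U).
    apply: mulr_ge0; last by nra.
    apply: mulr_ge0; exact: ltW.
  have -> : alpha / 2 * (p * (U * U)) = (alpha * p * (U * U)) * (1/2) by ring.
  have -> : p * (alpha * w * U * U) = (alpha * p * (U * U)) * w by ring.
  exact: ler_wpM2l.
move=> h2; apply: (le_trans h2); apply: ler_wpM2l; [exact: ltW | exact: hg].
Qed.

Lemma dd_cmp (R : realType) (K : nat) (eta alpha : R) (r th : 'I_K -> R) (a b : 'I_K) :
  0 < alpha -> 0 < eta -> 0 <= advU r th a -> advU r th b <= advU r th a / 2 ->
  dd eta alpha r th b <= dd eta alpha r th a.
Proof.
move=> ha he hUa hUb.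
have hwa := wgt_ge_half he hUa.
have hwb0 : 0 < wgt eta r th b := sigmoid_gt0 _.
have hwb1 : wgt eta r th b <= 1 := sigmoid_le1 _.
have key : wgt eta r th b * advU r th b <= wgt eta r th a * advU r th a.
  move: hwa hwb0 hwb1 hUa hUb.
  set wa := wgt eta r th a; set wb := wgt eta r th b.
  set Ua := advU r th a; set Ub := advU r th b.
  move=> hwa' hwb0' hwb1' hUa' hUb'.
  have h1 : Ua / 2 <= wa * Ua.
    have : 0 <= (wa - 1/2) * Ua by apply: mulr_ge0 => //; lra.
    lra.
  have h2 : wb * Ub <= Ua / 2.
    have [hp|hn] := leP 0 Ub.
      have : wb * Ub <= 1 * Ub by apply: ler_wpM2r.
      lra.
    have : wb * Ub < 0 by rewrite pmulr_rlt0.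
    lra.
  lra.
rewrite /dd -(mulrA alpha (wgt eta r th b)) -(mulrA alpha (wgt eta r th a)).
apply: ler_wpM2l; [exact: ltW | exact: key].
Qed.

Lemma pi_le_gap (R : realType) (K : nat) (r th : 'I_K -> R) (astar b : 'I_K) :
  (forall c, r c <= r astar) ->
  softmax th b * (r astar - r b) <= r astar - Jv r th.
Proof.
move=> h.
have -> : r astar - Jv r th = \sum_c softmax th c * (r astar - r c).
  under eq_bigr do rewrite mulrBr; rewrite sumrB -mulr_suml (softmax_sum1 th b) mul1r //.
apply: (@sum_ge_term _ _ (fun c => softmax th c * (r astar - r c)) b) => c.
apply: mulr_ge0; first exact/ltW/softmax_gt0.
by rewrite subr_ge0.
Qed.

Unset Implicit Arguments.
Lemma main_conv (R : realType) (K : nat)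
  (r : 'I_K -> R) (hr01 : forall a, 0 <= r a <= 1)
  (astar : 'I_K) (hopt : forall b, b != astar -> r b < r astar)
  (eta : R) (heta : 0 < eta) (theta0 : 'I_K -> R) (alpha : R) (ha : 0 < alpha)
  (a : 'I_K) :
  (fun t : nat => softmax (DG_iter eta alpha r theta0 t) a) @ \oo -->
          (if a == astar then (1 : R) else 0).
Proof.
set th := DG_iter eta alpha r theta0.
have thS : forall t, th t.+1 = DG_step eta alpha r (th t) by [].
have hle : forall c, r c <= r astar.
  by move=> c; case: (eqVneq c astar) => [->//|/hopt/ltW//].
set J := fun t => Jv r (th t).
have eU : forall t c, advU r (th t) c = r c - J t by [].
have Jnd : nondecreasing_seq J.
  apply/nondecreasing_seqP => n; rewrite /J thS; exact: step_mono.
have Jub : forall t, J t <= r astar by move=> t; exact: J_le astar hle.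
have hsup : has_sup (range J).
  split; first by exists (J 0%N), 0%N.
  by exists (r astar) => _ [n _ <-]; exact: Jub.
set L := sup (range J).
have hJ : J @ \oo --> L := nondecreasing_cvgn Jnd hsup.2.
have JL : forall t, J t <= L by move=> t; apply: sup_upper_bound => //; exists t.
have Lle : L <= r astar.
  by apply: ge_sup; [exists (J 0%N), 0%N | move=> _ [n _ <-]; exact: Jub].
have hJS : (fun t => J t.+1) @ \oo --> L by rewrite (cvg_shiftS J).
have hdiff : (fun t => J t.+1 - J t) @ \oo --> 0.
  by have := cvgB hJS hJ; rewrite subrr => h; exact: h.
have gain : forall b t, 0 <= advU r (th t) b ->
    expR (- alpha) * (alpha / 2 * (softmax (th t) b * advU r (th t) b ^+ 2)) <= J t.+1 - J t.
  by move=> b t h; rewrite /J thS; exact: step_gain.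
have above : forall b, L < r b -> (fun t => softmax (th t) b) @ \oo --> 0.
  move=> b hb.
  set C := expR (- alpha) * (alpha / 2) * (r b - L) ^+ 2.
  have hC : 0 < C.
    apply: mulr_gt0; first by apply: mulr_gt0; [exact: expR_gt0 | lra].
    by apply: exprn_gt0; lra.
  apply: (@squeeze_cvgr _ _ _ _ (fun _ => 0) (fun t => C^-1 * (J t.+1 - J t))).
  - apply: filterE => t; apply/andP; split; first exact/ltW/softmax_gt0.
    have hU : r b - L <= advU r (th t) b by rewrite eU; have := JL t; lra.
    have hp := softmax_gt0 (th t) b.
    have h1 : C * softmax (th t) b <= J t.+1 - J t.
      apply: le_trans (gain b t _); last by lra.
      have -> : C * softmax (th t) b =
        expR (- alpha) * (alpha / 2 * (softmax (th t) b * (r b - L) ^+ 2)) by rewrite /C; ring.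
      apply: ler_wpM2l; first exact/ltW/expR_gt0.
      apply: ler_wpM2l; first lra.
      apply: ler_wpM2l; first exact: ltW.
      rewrite !expr2; nra.
    rewrite -[softmax (th t) b](mulKf (lt0r_neq0 hC)).
    apply: ler_wpM2l => //; by rewrite invr_ge0 ltW.
  - exact: cvg_cst.
  - by have := @cvgMl_tmp _ _ _ _ _ C^-1 _ hdiff; rewrite mulr0 => h; exact: h.
have contra : L < r astar -> False.
  move=> hlt.
  have hpi0 : forall b, (fun t => softmax (th t) b) @ \oo --> 0.
    move=> b; have [hb|hb] := ltP L (r b); first exact: above.
    have hbs : b != astar by apply/eqP => e; move: hb; rewrite e; lra.
    have ev : \forall t \near \oo, 2 * r b - r astar < J t.
      by apply: (cvgr_gt L hJ); lra.
    case: ev => N _ HN.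
    have mono : forall k, th N astar - th N b <= th (N + k)%N astar - th (N + k)%N b.
      elim => [|k IH]; first by rewrite addn0.
      apply: (le_trans IH); rewrite addnS.
      change (th (N + k)%N astar - th (N + k)%N b <=
        (th (N + k)%N astar + dd eta alpha r (th (N + k)%N) astar) -
        (th (N + k)%N b + dd eta alpha r (th (N + k)%N) b)).
      have hJN := HN (N + k)%N (leq_addr k N).
      have hJu := Jub (N + k)%N.
      have := @dd_cmp _ _ eta alpha r (th (N + k)%N) astar b ha heta.
      rewrite !eU => h; have := h ltac:(lra) ltac:(lra); lra.
    have hst := above astar hlt.
    apply: (@squeeze_cvgr _ _ _ _ (fun _ => 0)
      (fun t => expR (th N b - th N astar) * softmax (th t) astar)).
    - exists N => // t /= hNt; apply/andP; split; first exact/ltW/softmax_gt0.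
      rewrite (softmax_ratio (th t) astar b); apply: ler_wpM2r; first exact/ltW/softmax_gt0.
      rewrite ler_expR; have := mono (t - N)%N; rewrite subnKC //; lra.
    - exact: cvg_cst.
    - by have := @cvgMl_tmp _ _ _ _ _ (expR (th N b - th N astar)) _ hst; rewrite mulr0 => h; exact: h.
  have hsum : (fun t => \sum_(c < K) softmax (th t) c) @ \oo --> \sum_(c < K) (0:R).
    apply: cvg_big; first exact: add_continuous.
    by move=> c _; exact: hpi0.
  rewrite big1 // in hsum.
  have e : (fun t => \sum_(c < K) softmax (th t) c) = (fun _ => 1).
    by apply: funext => t; exact: softmax_sum1.
  rewrite e in hsum.
  have : \forall t \near \oo, (1:R) < 1/2 by apply: (cvgr_lt 0 hsum); lra.
  case => N _ HN; have := HN N (leqnn N); lra.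
have hL : L = r astar.
  apply/eqP; rewrite eq_le Lle /= leNgt; apply/negP => h; exact: contra h.
have hJ' : J @ \oo --> r astar by rewrite -hL.
have hgap : (fun t => r astar - J t) @ \oo --> 0.
  by have := cvgB (cvg_cst (r astar)) hJ'; rewrite subrr => h; exact: h.
have other : forall b, b != astar -> (fun t => softmax (th t) b) @ \oo --> 0.
  move=> b hb; have hg : 0 < r astar - r b by have := hopt b hb; lra.
  apply: (@squeeze_cvgr _ _ _ _ (fun _ => 0)
      (fun t => (r astar - r b)^-1 * (r astar - J t))).
  - apply: filterE => t; apply/andP; split; first exact/ltW/softmax_gt0.
    have h1 := @pi_le_gap _ _ r (th t) astar b hle.
    rewrite -[softmax (th t) b](mulKf (lt0r_neq0 hg)).
    apply: ler_wpM2l; first by rewrite invr_ge0 ltW.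
    by rewrite mulrC.
  - exact: cvg_cst.
  - by have := @cvgMl_tmp _ _ _ _ _ (r astar - r b)^-1 _ hgap; rewrite mulr0 => h; exact: h.
case: (eqVneq a astar) => [->|hne]; last exact: other.
rewrite ?eqxx /=.
have hs : (fun t => \sum_(c < K | c != astar) softmax (th t) c) @ \oo -->
    \sum_(c < K | c != astar) (0:R).
  apply: cvg_big; first exact: add_continuous.
  by move=> c hc; exact: other.
rewrite big1 // in hs.
have e : (fun t => softmax (th t) astar) =
    (fun t => 1 - \sum_(c < K | c != astar) softmax (th t) c).
  apply: funext => t; rewrite -(softmax_sum1 (th t) astar) (bigD1 astar) //=.
  by rewrite addrK.
rewrite e; have := cvgB (cvg_cst (1:R)) hs; rewrite subr0 => h; exact: h.
Qed.

Theorem theorem7 (R : realType) (K : nat) (hK : (2 <= K)%N)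
  (r : 'I_K -> R) (hr01 : forall a, 0 <= r a <= 1) (hrinj : injective r)
  (astar : 'I_K) (hopt : forall b, b != astar -> r b < r astar)
  (eta : R) (heta : 0 < eta) (theta0 : 'I_K -> R) :
  exists2 alpha0 : R, 0 < alpha0 &
    forall alpha : R, 0 < alpha -> alpha <= alpha0 ->
      forall a : 'I_K,
        (fun t : nat => softmax (DG_iter eta alpha r theta0 t) a) @ \oo -->
          (if a == astar then (1 : R) else 0).
Proof.
exists 1 => // alpha ha _ a.
exact: main_conv.
Qed.
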